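(* If $g:\{0,1\}^n\to\{0,1\}^{m(n)}$ is super-bits (in the polynomial-security sense below), then the ensemble $(g(U_n))_{n\in\mathbb{N}}$ is $\cap$-unpredictable.
   Context: $U_n$ is the uniform distribution on $\{0,1\}^n$. A generator is a family $g:\{0,1\}^n\to\{0,1\}^{m(n)}$ computable by polynomial-size circuits with $m(n)>n$. A nondeterministic circuit $D$ accepts $x$ iff some assignment to its nondeterministic inputs makes it output 1. Here $g$ is called super-bits if for every nondeterministic polynomial-size circuit family $D$, every polynomial $p$ and all sufficiently large $n$, $\Pr[D(U_{m(n)})=1]-\Pr[D(g(U_n))=1]<1/p(n)$. A nondeterministic algorithm $\mathcal{A}$ is function-computing if on every input each computation branch yields one of $0,1,\bot$ and some branch yields $0$ or $1$; $\mathcal{A}(x)=c\in\{0,1\}$ if every branch yields $c$ or $\bot$, and otherwise $\mathcal{A}(x)=\bot$. An ensemble $(Z_n)$ (with $Z_n$ over $\{0,1\}^{l(n)}$) is $\cap$-predictable if there exist a polynomial-size nondeterministic function-computing algorithm $\mathcal{A}$, a polynomial $p$, and infinitely many $n$ each with some $i=i(n)<|Z_n|$ such that $\Pr[\mathcal{A}(Z_n[1\ldots i])=Z_n[i+1]]\ge 1/2+1/p(n)$; it is $\cap$-unpredictable otherwise. *)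

(* Defs.v *)
From mathcomp Require Import all_boot all_order all_algebra.
Set Implicit Arguments. Unset Strict Implicit. Unset Printing Implicit Defensive.
Import Order.TTheory GRing.Theory Num.Theory.

Definition poly_eval (s : seq nat) (n : nat) : nat :=
  \sum_(j < size s) nth 0 s j * n ^ j.

Definition is_poly (f : nat -> nat) : Prop :=
  exists s : seq nat, has (fun a => a != 0) s /\ forall n, f n = poly_eval s n.

(* Boolean circuits as straight-line programs.  Wires 0..k-1 are the inputs, *)
(* gate number j defines wire k+j; gates refer to wires by index.            *)
Inductive gate : Type :=
| GConst of bool
| GNot of nat
| GAnd of nat & nat
| GOr of nat & nat.

Record circuit : Type := Circuit { c_gates : seq gate; c_outs : seq nat }.

Definition csize (C : circuit) : nat := size (c_gates C) + size (c_outs C).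

Definition eval_gate (ws : seq bool) (g : gate) : bool :=
  match g with
  | GConst b => b
  | GNot i => ~~ nth false ws i
  | GAnd i j => nth false ws i && nth false ws j
  | GOr i j => nth false ws i || nth false ws j
  end.

Definition eval_wires (inp : seq bool) (gs : seq gate) : seq bool :=
  foldl (fun ws g => rcons ws (eval_gate ws g)) inp gs.

Definition ceval (C : circuit) (x : seq bool) : seq bool :=
  [seq nth false (eval_wires x (c_gates C)) o | o <- c_outs C].

(* Nondeterministic circuits: a circuit reading the input x followed by    *)
(* nd_wit nondeterministic bits w.                                         *)
Record ndcircuit : Type := NDCircuit { nd_circ : circuit; nd_wit : nat }.

Definition ndsize (D : ndcircuit) : nat := csize (nd_circ D).

Definition nd_branch (D : ndcircuit) (x : seq bool) (w : (nd_wit D).-tuple bool)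
  : bool := nth false (ceval (nd_circ D) (x ++ val w)) 0.
Arguments nd_branch : clear implicits.

Definition nd_accepts (D : ndcircuit) (x : seq bool) : bool :=
  [exists w : (nd_wit D).-tuple bool, nd_branch D x w].

(* Function-computing branch output in {0,1,bot}: output bits (b0,b1);      *)
(* b0 = false means bot, otherwise the branch yields b1.                   *)
Definition fc_branch (A : ndcircuit) (x : seq bool) (w : (nd_wit A).-tuple bool)
  : option bool :=
  let o := ceval (nd_circ A) (x ++ val w) in
  if nth false o 0 then Some (nth false o 1) else None.
Arguments fc_branch : clear implicits.

Definition function_computing_on (A : ndcircuit) (len : nat) : Prop :=
  forall x : len.-tuple bool,
    [exists w : (nd_wit A).-tuple bool, fc_branch A (val x) w != None].

(* A(x) = Some c iff every branch yields c or bot (and some branch yields c, *)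
(* which is automatic for function-computing A); otherwise None (= bot).   *)
Definition fc_value (A : ndcircuit) (x : seq bool) : option bool :=
  if [exists w, fc_branch A x w == Some true] &&
     [forall w, fc_branch A x w != Some false] then Some true
  else if [exists w, fc_branch A x w == Some false] &&
          [forall w, fc_branch A x w != Some true] then Some false
  else None.

Local Open Scope ring_scope.
Definition prU (n : nat) (P : pred (n.-tuple bool)) : rat :=
  (#|[set x : n.-tuple bool | P x]|)%:R / (2 ^ n)%N%:R.

Definition is_generator (m : nat -> nat)
  (g : forall n, n.-tuple bool -> (m n).-tuple bool) : Prop :=
  (forall n, (n < m n)%N) /\
  exists q, is_poly q /\
    forall n, exists C : circuit, (csize C <= q n)%N /\
      forall x : n.-tuple bool, ceval C (val x) = val (g n x).

Definition super_bits (m : nat -> nat)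
  (g : forall n, n.-tuple bool -> (m n).-tuple bool) : Prop :=
  forall (D : nat -> ndcircuit) (q p : nat -> nat),
    is_poly q -> (forall n, (ndsize (D n) <= q n)%N) -> is_poly p ->
    exists N, forall n, (N <= n)%N ->
      prU (fun y : (m n).-tuple bool => nd_accepts (D n) (val y))
      - prU (fun x : n.-tuple bool => nd_accepts (D n) (val (g n x)))
      < 1 / (p n)%:R.

(* Ensembles: Z n is a distribution on {0,1}^{l n} (probability weights). *)
Definition ensemble (l : nat -> nat) := forall n, {ffun (l n).-tuple bool -> rat}.

Definition gen_ensemble (m : nat -> nat)
  (g : forall n, n.-tuple bool -> (m n).-tuple bool) : ensemble m :=
  fun n => [ffun z => prU (fun x : n.-tuple bool => g n x == z)].

(* Pr[ A(Z_n[1..i]) = Z_n[i+1] ]  (bits indexed from 1 in the paper) *)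
Definition pred_prob (l : nat -> nat) (Z : ensemble l) (n i : nat)
  (A : ndcircuit) : rat :=
  \sum_(z : (l n).-tuple bool)
     Z n z * (fc_value A (take i (val z)) == Some (nth false (val z) i))%:R.

Definition cap_predictable (l : nat -> nat) (Z : ensemble l) : Prop :=
  exists (A : nat -> ndcircuit) (q p : nat -> nat),
    is_poly q /\ (forall n, (ndsize (A n) <= q n)%N) /\ is_poly p /\
    forall N, exists n, (N <= n)%N /\
      exists i, (i < l n)%N /\ function_computing_on (A n) i /\
        1 / 2 + 1 / (p n)%:R <= pred_prob Z n i (A n).

Definition cap_unpredictable (l : nat -> nat) (Z : ensemble l) : Prop :=
  ~ cap_predictable Z.

(* Main.v *)
Require Import Defs.
From mathcomp Require Import all_boot all_order all_algebra.
From mathcomp Require Import zify ring lra.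
Set Implicit Arguments. Unset Strict Implicit. Unset Printing Implicit Defensive.

Definition remap (i k m r : nat) : nat :=
  if r < i then r else if r < i + k then r - i + m else r - (i + k) + (m + k).

Definition rgate (f : nat -> nat) (g : gate) : gate :=
  match g with
  | GConst b => GConst b
  | GNot a => GNot (f a)
  | GAnd a b => GAnd (f a) (f b)
  | GOr a b => GOr (f a) (f b)
  end.

Definition mkD (A : ndcircuit) (i m : nat) : ndcircuit :=
  let k := nd_wit A in let gs := c_gates (nd_circ A) in
  let outs := c_outs (nd_circ A) in
  let T := i + k + size gs in let L := m + k + size gs in
  let f := remap i k m in
  let ro j := let r := nth T outs j in if r < T then f r else L + 10 in
  NDCircuit (Circuit (map (rgate f) gs ++
     [:: GNot i; GNot (ro 1); GAnd (ro 1) L; GAnd (L + 1) i; GOr (L + 2) (L + 3);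
         GAnd (ro 0) (L + 4) ]) [:: L + 5 ]) k.

Lemma eval_wires_rcons inp gs g :
  eval_wires inp (rcons gs g) =
  rcons (eval_wires inp gs) (eval_gate (eval_wires inp gs) g).
Proof. by rewrite /eval_wires foldl_rcons. Qed.

Lemma size_eval_wires inp gs : size (eval_wires inp gs) = size inp + size gs.
Proof.
elim/last_ind: gs => [|gs g IH]; first by rewrite addn0.
by rewrite eval_wires_rcons !size_rcons IH addnS.
Qed.

Lemma remap_ok i k m (y w : seq bool) gs :
  i < m -> size y = m -> size w = k ->
  forall r, nth false (eval_wires (y ++ w) (map (rgate (remap i k m)) gs))
              (remap i k m r)
          = nth false (eval_wires (take i y ++ w) gs) r.
Proof.
move=> im sy sw.
have sty : size (take i y) = i by rewrite size_take sy im.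
elim/last_ind: gs => [|gs g IH] r.
  rewrite /= !nth_cat sty sy /remap.
  case: (ltnP r i) => ri.
    by rewrite (ltn_trans ri im) nth_take.
  case: (ltnP r (i + k)) => rik.
    have -> : r - i + m < m = false by lia.
    by congr nth; lia.
  have -> : r - (i + k) + (m + k) < m = false by lia.
  rewrite !nth_default //; lia.
rewrite map_rcons !eval_wires_rcons !nth_rcons !size_eval_wires size_map
  !size_cat sty sy sw.
have eg : eval_gate (eval_wires (y ++ w) [seq rgate (remap i k m) i0 | i0 <- gs])
   (rgate (remap i k m) g) = eval_gate (eval_wires (take i y ++ w) gs) g.
  by case: g => [b|a|a b|a b] //=; rewrite ?IH.
rewrite eg IH.
have -> : (remap i k m r < m + k + size gs) = (r < i + k + size gs).
  rewrite /remap; case: ifP => ?; [|case: ifP => ?]; apply/idP/idP; lia.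
have -> : (remap i k m r == m + k + size gs) = (r == i + k + size gs).
  rewrite /remap; case: ifP => ?; [|case: ifP => ?]; apply/idP/idP; lia.
by [].
Qed.

Lemma ceval_nth (C : circuit) inp j :
  nth false (ceval C inp) j =
  nth false (eval_wires inp (c_gates C))
    (nth (size inp + size (c_gates C)) (c_outs C) j).
Proof.
rewrite /ceval; case: (ltnP j (size (c_outs C))) => h.
  by rewrite (nth_map (size inp + size (c_gates C))).
rewrite nth_default ?size_map // [nth _ _ j]nth_default //.
by rewrite nth_default // size_eval_wires.
Qed.


Lemma ew_prefix s gs j : j < size s -> nth false (eval_wires s gs) j = nth false s j.
Proof.
move=> h; elim/last_ind: gs => [//|gs g IH].
by rewrite eval_wires_rcons nth_rcons size_eval_wires (ltn_addr _ h) IH.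
Qed.

Lemma ew_out s gs j : size s + size gs <= j -> nth false (eval_wires s gs) j = false.
Proof. by move=> h; rewrite nth_default // size_eval_wires. Qed.

Lemma ew_last s gs g j : j = size s + size gs ->
  nth false (eval_wires s (rcons gs g)) j = eval_gate (eval_wires s gs) g.
Proof.
by move=> ->; rewrite eval_wires_rcons nth_rcons size_eval_wires ltnn eqxx.
Qed.

Lemma ew_mid s gs g j : j < size s + size gs ->
  nth false (eval_wires s (rcons gs g)) j = nth false (eval_wires s gs) j.
Proof. by move=> h; rewrite eval_wires_rcons nth_rcons size_eval_wires h. Qed.


Ltac decide_cmp := repeat match goal with
 | |- context [ (?a < ?b)%N ] =>
     first [ have -> : (a < b)%N = true by lia
           | have -> : (a < b)%N = false by (apply/negbTE; lia) ]
 | |- context [ (?a == ?b ) ] =>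
     first [ have -> : (a == b) = true by lia
           | have -> : (a == b) = false by (apply/negbTE; lia) ]
 end.

Lemma six (s : seq bool) ii a0 a1 :
  ii < size s -> (a0 < size s \/ size s + 6 <= a0) ->
  (a1 < size s \/ size s + 6 <= a1) ->
  nth false (eval_wires s [:: GNot ii; GNot a1; GAnd a1 (size s);
     GAnd (size s + 1) ii; GOr (size s + 2) (size s + 3);
     GAnd a0 (size s + 4)]) (size s + 5) =
  nth false s a0 && (nth false s a1 != nth false s ii).
Proof.
move=> hi h0 h1.
rewrite /eval_wires /= !nth_rcons !size_rcons.
case: h0 => h0; case: h1 => h1; decide_cmp.
all: try (rewrite [nth false s a0]nth_default; last lia).
all: try (rewrite [nth false s a1]nth_default; last lia).
all: by case: (nth false s a0); case: (nth false s a1); case: (nth false s ii).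
Qed.

Lemma eval_wires_cat s a b : eval_wires s (a ++ b) = eval_wires (eval_wires s a) b.
Proof. by rewrite /eval_wires foldl_cat. Qed.

Lemma mkD_branch A i m (y w : seq bool) :
  i < m -> size y = m -> size w = nd_wit A ->
  nth false (ceval (nd_circ (mkD A i m)) (y ++ w)) 0 =
  let o := ceval (nd_circ A) (take i y ++ w) in
  nth false o 0 && (nth false o 1 != nth false y i).
Proof.
move=> im sy sw.
have sty : size (take i y) = i by rewrite size_take sy im.
rewrite /= !ceval_nth size_cat sty sw /= eval_wires_cat.
set gs := c_gates (nd_circ A).
set k := nd_wit A.
set T := i + k + size gs.
set L := m + k + size gs.
set Dw := eval_wires (y ++ w) (map (rgate (remap i k m)) gs).
set Aw := eval_wires (take i y ++ w) gs.
have sD : size Dw = L by rewrite size_eval_wires size_map size_cat sy sw.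
have sA : size Aw = T by rewrite size_eval_wires size_cat sty sw.
have key : forall j, let r := nth T (c_outs (nd_circ A)) j in
   let a := if r < T then remap i k m r else L + 10 in
   (a < L \/ L + 6 <= a) /\ nth false Dw a = nth false Aw r.
  move=> j r a; rewrite /a; case: ifP => hr.
    split; first by left; rewrite /remap /L /T in hr *; case: ifP => ?; [|case: ifP => ?]; lia.
    by rewrite /Dw /Aw remap_ok.
  split; first by right; lia.
  rewrite !nth_default //; [rewrite sA; lia | rewrite sD; lia].
have [k0 e0] := key 0.
have [k1 e1] := key 1.
rewrite -sD in k0 k1 e0 e1 *.
rewrite six //; last by rewrite sD; lia.
rewrite e0 e1 /Dw ew_prefix ?size_cat ?sy //; last by lia.
by rewrite nth_cat sy im.
Qed.

Lemma mkD_size A i m : ndsize (mkD A i m) <= ndsize A + 7.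
Proof. rewrite /ndsize /csize /= size_cat size_map /=; lia. Qed.

Lemma mkD_accepts A i m (y : seq bool) : i < m -> size y = m ->
  nd_accepts (mkD A i m) y =
  [exists w : (nd_wit A).-tuple bool, fc_branch A (take i y) w == Some (~~ nth false y i)].
Proof.
move=> im sy; apply: eq_existsb => w.
rewrite /nd_branch /fc_branch mkD_branch ?size_tuple //=.
case: (nth false _ 0); case: (nth false _ 1); case: (nth false y i) => //.
Qed.

Lemma fc_value_eq A x b :
  [exists w, fc_branch A x w != None] ->
  (fc_value A x == Some b) = ~~ [exists w, fc_branch A x w == Some (~~ b)].
Proof.
move=> /existsP [w0 hw0].
rewrite /fc_value -!negb_exists.
have H : [exists w, fc_branch A x w == Some true] || [exists w, fc_branch A x w == Some false].
  by case E: (fc_branch A x w0) hw0 => [[]|] // _; apply/orP; [left|right]; apply/existsP; exists w0; rewrite E.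
move: H; case: b => /=;
case: [exists w, fc_branch A x w == Some true]; case: [exists w, fc_branch A x w == Some false] => //.
Qed.

Section Prob.
Import GRing.Theory Num.Theory.
Local Open Scope ring_scope.

Lemma card_pred_sum (T : finType) (Q : pred T) :
  #|[set x | Q x]| = (\sum_x (Q x : nat))%N.
Proof.
rewrite -sum1_card big_mkcond /=; apply: eq_bigr => x _.
by rewrite inE; case: (Q x).
Qed.

Lemma sum_pred_comp n M (g : n.-tuple bool -> M.-tuple bool) (P : pred (M.-tuple bool)) :
  (\sum_z #|[set x | g x == z]| * P z)%N = #|[set x | P (g x)]|.
Proof.
rewrite card_pred_sum.
under eq_bigr => z _ do rewrite card_pred_sum big_distrl /=.
rewrite exchange_big /=; apply: eq_bigr => x _.
rewrite (bigD1 (g x)) //= eqxx mul1n big1 ?addn0 // => z /negbTE.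
by rewrite eq_sym => ->.
Qed.

Lemma prU_sum n M (g : n.-tuple bool -> M.-tuple bool) (P : pred (M.-tuple bool)) :
  \sum_z prU (fun x : n.-tuple bool => g x == z) * (P z)%:R =
  prU (fun x => P (g x)).
Proof.
rewrite /prU -sum_pred_comp natr_sum mulr_suml; apply: eq_bigr => z _.
by rewrite natrM mulrAC.
Qed.

Lemma prU_compl n (P : pred (n.-tuple bool)) :
  prU (fun x => ~~ P x) = 1 - prU P.
Proof.
rewrite /prU.
have H := cardsC [set x | P x].
have E : ~: [set x | P x] = [set x | ~~ P x] by apply/setP => x; rewrite !inE.
rewrite E card_tuple card_bool in H.
have D : (2 ^ n)%:R != 0 :> rat by rewrite pnatr_eq0 expn_eq0.
rewrite -H natrD; field => //.
by rewrite -natrD H.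
Qed.

Lemma prU_half M (F : pred (M.-tuple bool)) (phi : M.-tuple bool -> M.-tuple bool) :
  involutive phi -> (forall y, F y || F (phi y)) -> 1 / 2 <= prU F.
Proof.
move=> inv hF; rewrite /prU.
set S := [set y | F y].
have H := cardsC S.
rewrite card_tuple card_bool in H.
have le : (#|~: S| <= #|S|)%N.
  rewrite -(card_imset _ (inv_inj inv)); apply: subset_leq_card.
  apply/subsetP => z /imsetP [y]; rewrite !inE => Fy ->.
  by move: (hF y); rewrite (negbTE Fy).
have le2 : ((2 ^ M)%:R <= 2 * (#|S|)%:R :> rat).
  by rewrite -H natrD; move: le; rewrite -(ler_nat rat) => le'; lra.
have D : 0 < (2 ^ M)%:R :> rat by rewrite ltr0n expn_gt0.
rewrite ler_pdivlMr // mulrAC ler_pdivrMr //; lra.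
Qed.

End Prob.

Definition flipt M i (y : M.-tuple bool) : M.-tuple bool :=
  insubd y (set_nth false y i (~~ nth false y i)).

Lemma flipt_val M i (y : M.-tuple bool) : i < M ->
  val (flipt i y) = set_nth false y i (~~ nth false y i).
Proof.
move=> im; have E : maxn i.+1 M = M by apply/maxn_idPr.
by rewrite val_insubd size_set_nth size_tuple E eqxx.
Qed.

Lemma flipt_nth M i (y : M.-tuple bool) j : i < M ->
  nth false (flipt i y) j = if j == i then ~~ nth false y i else nth false y j.
Proof. by move=> im; rewrite flipt_val // nth_set_nth /=. Qed.

Lemma flipt_inv M i : i < M -> involutive (@flipt M i).
Proof.
move=> im y; apply: val_inj; apply: (@eq_from_nth _ false); first by rewrite !size_tuple.
move=> j _; rewrite !flipt_nth // eqxx.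
by case: (j =P i) => [->|]; rewrite ?negbK.
Qed.

Lemma flipt_take M i (y : M.-tuple bool) : i < M -> take i (flipt i y) = take i y.
Proof.
move=> im; rewrite flipt_val // set_nthE size_tuple im take_size_cat //.
by rewrite size_take size_tuple im.
Qed.

Lemma is_poly_add7 q : is_poly q -> is_poly (fun n => q n + 7).
Proof.
case=> s [hs hq]; case: s hs hq => [//|a t] _ hq.
exists ((a + 7) :: t); split; first by rewrite /= addn_eq0 andbF.
move=> n; rewrite hq /poly_eval /= !big_ord_recl /=; lia.
Qed.

Lemma eq_prU n (P Q : pred (n.-tuple bool)) : P =1 Q -> prU P = prU Q.
Proof.
by move=> h; rewrite /prU (@eq_card _ [set x | P x] [set x | Q x]) // => x; rewrite !inE h.
Qed.

From Stdlib Require Import ClassicalEpsilon.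

Local Open Scope ring_scope.
Import GRing.Theory Num.Theory.

Theorem proposition5p2 (m : nat -> nat)
  (g : forall n, n.-tuple bool -> (m n).-tuple bool) :
  is_generator g -> super_bits g -> cap_unpredictable (gen_ensemble g).
Proof.
move=> _ sb [A [q [p [hq [hA [hp H]]]]]].
pose good n i := (i < m n)%N /\ function_computing_on (A n) i /\
   1 / 2 + 1 / (p n)%:R <= pred_prob (gen_ensemble g) n i (A n).
pose ich n := epsilon (inhabits 0%N) (good n).
pose D n := mkD (A n) (ich n) (m n).
have [N HN] := sb D (fun n => q n + 7)%N p (is_poly_add7 hq)
   (fun n => leq_trans (mkD_size _ _ _) (leq_add (hA n) (leqnn 7))) hp.
have [n [Nn [i0 g0]]] := H N.
have [im [fc hpp]] : good n (ich n) by apply: epsilon_spec; exists i0.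
have {HN} := HN n Nn.
set i := ich n in im fc hpp.
rewrite /D -/i.
pose F (y : (m n).-tuple bool) :=
  [exists w : (nd_wit (A n)).-tuple bool,
     fc_branch (A n) (take i y) w == Some (~~ nth false y i)].
have fcy : forall y : (m n).-tuple bool,
   [exists w, fc_branch (A n) (take i y) w != None].
  move=> y; have := fc (insubd (nseq_tuple i false) (take i y)).
  by rewrite val_insubd size_take size_tuple im eqxx.
rewrite (eq_prU (Q := F)); last by move=> y; rewrite mkD_accepts ?size_tuple.
rewrite (eq_prU (Q := fun x => F (g n x))); last by move=> x; rewrite mkD_accepts ?size_tuple.
have half : 1 / 2 <= prU F.
  apply: (prU_half (flipt_inv im)) => y.
  have /existsP [w hw] := fcy y.
  rewrite /F flipt_take // flipt_nth // eqxx negbK.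
  case E: (fc_branch (A n) (take i y) w) hw => [c|] // _.
  case: (c =P ~~ nth false y i) => [ec|nec].
    by apply/orP; left; apply/existsP; exists w; rewrite E ec.
  apply/orP; right; apply/existsP; exists w; rewrite E.
  by move: nec; case: c {E}; case: (nth false y i).
have pp : pred_prob (gen_ensemble g) n i (A n) = 1 - prU (fun x => F (g n x)).
  rewrite -prU_compl /pred_prob.
  under eq_bigr => z _ do rewrite ffunE.
  rewrite prU_sum; apply: eq_prU => x.
  by rewrite fc_value_eq ?fcy // negbK.
lra.
Qed.
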